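(* Let $q\in\mathbb C_p$ with $|1-q|_p<p^{-1/(p-1)}$ ($p$ an odd prime). For $m,n\in\mathbb Z_+$ with $m\le n$, $$\binom nm(q-1)^m=\sum_{k=m}^n(q-1)^k\binom nk_q s_{1,q}(k,m).$$
   Context: $[x]_q=\frac{1-q^x}{1-q}$; $[n]_q!=[n]_q\cdots[1]_q$ ($[0]_q!=1$), $\binom nk_q=\frac{[n]_q!}{[k]_q![n-k]_q!}$. The $q$-Stirling numbers of the first kind $s_{1,q}(k,l)$ are defined by $[x]_q[x-1]_q\cdots[x-k+1]_q=q^{-\binom k2}\sum_{l=0}^k s_{1,q}(k,l)[x]_q^l$ for $k\in\mathbb Z_+$, as an identity of polynomials in $[x]_q$ (using $[x-i]_q=q^{-i}([x]_q-[i]_q)$). *)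

(* Defs.v *)
From HB Require Import structures.
From mathcomp Require Import all_boot all_order all_algebra.
From mathcomp Require Import all_classical all_reals all_analysis.
Set Implicit Arguments. Unset Strict Implicit. Unset Printing Implicit Defensive.
Import Order.TTheory GRing.Theory Num.Theory.
Local Open Scope ring_scope.

(* A model of C_p: a field K with an absolute value abs : K -> R which is
   non-archimedean, normalized by |p| = 1/p, complete, and K algebraically
   closed.  (C_p is such a field.) *)
Definition cauchy_complete (R : realType) (K : fieldType) (abs : K -> R) : Prop :=
  forall u : nat -> K,
    (forall e : R, 0 < e -> exists N : nat, forall m n : nat,
        (N <= m)%N -> (N <= n)%N -> abs (u m - u n) < e) ->
    exists l : K, forall e : R, 0 < e -> exists N : nat, forall n : nat,
        (N <= n)%N -> abs (u n - l) < e.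

Definition padic_abs (R : realType) (K : fieldType) (p : nat) (abs : K -> R) : Prop :=
  (forall x, 0 <= abs x) /\
  (forall x, abs x = 0 <-> x = 0) /\
  (forall x y, abs (x * y) = abs x * abs y) /\
  (forall x y, abs (x + y) <= Num.max (abs x) (abs y)) /\
  abs (p%:R) = (p%:R)^-1 /\
  cauchy_complete abs.

(* [x]_q for x a natural number: (1 - q^x)/(1 - q), written as the
   (division-free) geometric sum 1 + q + ... + q^(x-1)  (= x when q = 1). *)
Definition qnum (K : fieldType) (q : K) (x : nat) : K := \sum_(i < x) q ^+ i.

Definition qfact (K : fieldType) (q : K) (n : nat) : K :=
  \prod_(1 <= i < n.+1) qnum q i.

Definition qbinom (K : fieldType) (q : K) (n k : nat) : K :=
  qfact q n / (qfact q k * qfact q (n - k)).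

(* q-Stirling numbers of the first kind: with T = [x]_q and
   [x - i]_q = q^{-i} (T - [i]_q),
   prod_{i<k} [x-i]_q = q^{-binom k 2} sum_l s_{1,q}(k,l) T^l,
   i.e. s_{1,q}(k,l) is the l-th coefficient of
   q^{binom k 2} * prod_{i<k} q^{-i} (T - [i]_q). *)
Definition qstirling1 (K : fieldType) (q : K) (k l : nat) : K :=
  (q ^+ 'C(k, 2) *: \prod_(i < k) (q ^- i *: ('X - (qnum q i)%:P)))`_l.

(* Main.v *)
Require Import Defs.
From HB Require Import structures.
From mathcomp Require Import all_boot all_order all_algebra.
From mathcomp Require Import all_classical all_reals all_analysis.
From mathcomp Require Import ring lra.
Import Order.TTheory GRing.Theory Num.Theory.
Set Implicit Arguments. Unset Strict Implicit.
Local Open Scope ring_scope.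

Fixpoint Gq (K : fieldType) (q : K) (n k : nat) {struct n} : K :=
  match n, k with
  | _, 0 => 1
  | 0, _.+1 => 0
  | n'.+1, k'.+1 => q ^+ k'.+1 * Gq q n' k'.+1 + Gq q n' k'
  end.
Arguments Gq {K} q n k.

Lemma Gq_big (K : fieldType) (q : K) n k : (n < k)%N -> Gq q n k = 0.
Proof.
elim: n k => [|n IH] [|k] //= hk.
by rewrite !IH ?mulr0 ?addr0 // ltnW.
Qed.

Lemma Gq_nn (K : fieldType) (q : K) n : Gq q n n = 1.
Proof. by elim: n => [|n IH] //=; rewrite Gq_big // mulr0 add0r. Qed.

Lemma Gq_n0 (K : fieldType) (q : K) n : Gq q n 0 = 1.
Proof. by case: n. Qed.

Definition Pk (K : fieldType) (q : K) (k : nat) : {poly K} :=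
  \prod_(i < k) ('X - (qnum q i)%:P).

Lemma Pk_S (K : fieldType) (q : K) k : Pk q k.+1 = Pk q k * ('X - (qnum q k)%:P).
Proof. by rewrite /Pk big_ord_recr. Qed.

Lemma Pk_key (K : fieldType) (q : K) k :
  (1 + (q - 1) *: 'X) * Pk q k = q ^+ k *: Pk q k + (q - 1) *: Pk q k.+1.
Proof.
rewrite Pk_S -!mul_polyC.
have e : (q ^+ k)%:P = 1 + (q - 1)%:P * (qnum q k)%:P.
  by rewrite -polyCM -polyC1 -polyCD /qnum -subrX1 addrC subrK.
rewrite e; ring.
Qed.

Lemma Pk_key' (K : fieldType) (q : K) (c : K) k :
  (1 + (q - 1) *: 'X) * (c *: Pk q k) = (c * q ^+ k) *: Pk q k + (c * (q - 1)) *: Pk q k.+1.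
Proof.
have := Pk_key q k; rewrite -!mul_polyC !polyCM => e.
transitivity (c%:P * ((1 + (q - 1)%:P * 'X) * Pk q k)); first ring.
rewrite e; ring.
Qed.

Lemma polyid (K : fieldType) (q : K) n :
  \sum_(0 <= k < n.+1) ((q - 1) ^+ k * Gq q n k) *: Pk q k = (1 + (q - 1) *: 'X) ^+ n.
Proof.
elim: n => [|n IH].
  by rewrite big_nat1 /= expr0 mulr1 scale1r /Pk big_ord0.
rewrite exprS -IH mulr_sumr.
rewrite [RHS](eq_bigr (fun k => ((q - 1) ^+ k * Gq q n k * q ^+ k) *: Pk q k +
   ((q - 1) ^+ k * Gq q n k * (q - 1)) *: Pk q k.+1)); last first.
  by move=> k _; exact: Pk_key'.
rewrite big_split /=.
rewrite big_nat_recl //= expr0 mul1r.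
have -> : (1:K) *: Pk q 0 = Pk q 0 by exact: scale1r.
rewrite (eq_bigr (fun i => ((q - 1) ^+ i.+1 * q ^+ i.+1 * Gq q n i.+1) *: Pk q i.+1
   + ((q - 1) ^+ i.+1 * Gq q n i) *: Pk q i.+1)); last first.
  by move=> i _; rewrite -scalerDl; congr (_ *: _); ring.
rewrite big_split /= addrA; congr (_ + _).
  rewrite [RHS]big_nat_recl //=.
  have -> : ((q - 1) ^+ 0 * Gq q n 0 * q ^+ 0) *: Pk q 0 = Pk q 0.
    by rewrite Gq_n0 !expr0 !mulr1; exact: scale1r.
  congr (_ + _).
  rewrite [LHS]big_nat_recr //= Gq_big //.
  have -> : ((q - 1) ^+ n.+1 * q ^+ n.+1 * 0) *: Pk q n.+1 = 0.
    by rewrite mulr0; exact: scale0r.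
  rewrite addr0; apply: eq_bigr => k _; congr (_ *: _); rewrite exprS; ring.
apply: eq_bigr => k _; congr (_ *: _); rewrite exprS; ring.
Qed.

Lemma qnumD (K : fieldType) (q : K) a b :
  qnum q a + q ^+ a * qnum q b = qnum q (a + b).
Proof.
rewrite /qnum big_split_ord /= mulr_sumr; congr (_ + _).
by apply: eq_bigr => i _; rewrite exprD.
Qed.

Lemma qfactS (K : fieldType) (q : K) n : qfact q n.+1 = qfact q n * qnum q n.+1.
Proof. by rewrite /qfact big_nat_recr. Qed.

Lemma qfact0 (K : fieldType) (q : K) : qfact q 0 = 1.
Proof. by rewrite /qfact big_geq. Qed.

Lemma Gq_fact (K : fieldType) (q : K) n k : (k <= n)%N ->
  Gq q n k * qfact q k * qfact q (n - k) = qfact q n.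
Proof.
elim: n k => [|n IH] [|k] //=.
- by move=> _; rewrite qfact0 !mul1r.
- by move=> _; rewrite qfact0 !mul1r subn0.
rewrite ltnS subSS => hk.
case: (ltngtP k n) hk => // [hlt|->] _; last first.
  by rewrite Gq_big // Gq_nn subnn qfact0 mulr0 add0r !mul1r mulr1.
have IH1 := IH k.+1 hlt.
have IH0 := IH k (ltnW hlt).
rewrite qfactS -(subnSK hlt) qfactS (subnSK hlt).
transitivity (q ^+ k.+1 * qnum q (n - k) *
   (Gq q n k.+1 * (qfact q k * qnum q k.+1) * qfact q (n - k.+1)) +
   qnum q k.+1 * (Gq q n k * qfact q k * (qfact q (n - k.+1) * qnum q (n - k)))).
  ring.
rewrite -qfactS IH1 -(subnSK hlt) -qfactS (subnSK hlt) IH0 qfactS.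
have e : (k.+1 + (n - k))%N = n.+1 by rewrite addSn subnKC // ltnW.
rewrite -e -qnumD; ring.
Qed.

Lemma stir_eq (K : fieldType) (q : K) k l : q != 0 ->
  qstirling1 q k l = (Pk q k)`_l.
Proof.
move=> q0; rewrite /qstirling1 scaler_prod scalerA prodfV prodrXr.
rewrite -(big_mkord xpredT (fun i => i)) bin2_sum mulfV ?expf_neq0 //.
by rewrite scale1r.
Qed.

Lemma size_Pk (K : fieldType) (q : K) k : size (Pk q k) = k.+1.
Proof. by rewrite /Pk size_prod_XsubC /index_enum; unlock; rewrite -enumT size_enum_ord. Qed.

Lemma coef_binom (K : fieldType) (c : K) n m : (m <= n)%N ->
  ((1 + c *: 'X) ^+ n)`_m = c ^+ m *+ 'C(n, m).
Proof.
move=> hm; rewrite addrC exprD1n coef_sum.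
have hm' : (m < n.+1)%N by [].
rewrite (bigD1 (Ordinal hm')) //= big1 ?addr0.
  by rewrite coefMn exprZn coefZ coefXn eqxx mulr1.
move=> i /negbTE hi; rewrite coefMn exprZn coefZ coefXn.
have -> : (m == i) = false.
  by apply/negbTE; apply/eqP => e; move: hi; rewrite -val_eqE /= e eqxx.
by rewrite mulr0 mul0rn.
Qed.

Section Abs.
Context (R : realType) (K : fieldType) (p : nat) (abs : K -> R).
Hypothesis habs : padic_abs p abs.
Hypothesis pp : prime p.

Let h0 : forall x, 0 <= abs x. Proof. by case: habs. Qed.
Let hz : forall x, abs x = 0 <-> x = 0. Proof. by case: habs => _ []. Qed.
Let hm : forall x y, abs (x * y) = abs x * abs y. Proof. by case: habs => _ [_ []]. Qed.
Let hu : forall x y, abs (x + y) <= Num.max (abs x) (abs y).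
Proof. by case: habs => _ [_ [_ []]]. Qed.
Let hp : abs (p%:R) = (p%:R)^-1. Proof. by case: habs => _ [_ [_ [_ []]]]. Qed.

Lemma abs0 : abs 0 = 0. Proof. exact: (proj2 (hz 0) erefl). Qed.

Lemma abs1 : abs 1 = 1.
Proof.
have n0 : abs 1 != 0 by apply/eqP => /hz /eqP; rewrite oner_eq0.
by apply: (mulIf n0); rewrite mul1r -hm mulr1.
Qed.

Lemma absN x : abs (- x) = abs x.
Proof.
have e : abs (-1) * abs (-1) = 1 by rewrite -hm mulrNN mulr1 abs1.
have h := h0 (-1).
have e1 : abs (-1) = 1 by nra.
by rewrite -mulN1r hm e1 mul1r.
Qed.

Lemma absB x y : abs (x - y) = abs (y - x).
Proof. by rewrite -absN opprB. Qed.

Lemma abs_ultra x y M : abs x <= M -> abs y <= M -> abs (x + y) <= M.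
Proof. move=> hx hy; apply: le_trans (hu x y) _; by rewrite ge_max hx hy. Qed.

Lemma abs_sum n (F : 'I_n -> K) M : 0 <= M -> (forall i, abs (F i) <= M) ->
  abs (\sum_(i < n) F i) <= M.
Proof.
move=> M0 hF; elim/big_ind: _ => //.
- by rewrite abs0.
- by move=> x y; apply: abs_ultra.
Qed.

Lemma abs_exp x n : abs (x ^+ n) = abs x ^+ n.
Proof. by elim: n => [|n IH]; rewrite ?abs1 // !exprS hm IH. Qed.

Lemma abs_nat_le1 n : abs (n%:R) <= 1.
Proof.
elim: n => [|n IH]; first by rewrite abs0.
by rewrite -addn1 natrD; apply: abs_ultra => //; rewrite abs1.
Qed.

Lemma abs_p_lt1 : abs (p%:R) < 1.
Proof. rewrite hp invf_lt1 ?ltr0n ?prime_gt0 // ltr1n; exact: prime_gt1. Qed.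

Lemma abs_p_gt0 : 0 < abs (p%:R).
Proof. by rewrite hp invr_gt0 ltr0n prime_gt0. Qed.

Lemma abs_coprime n : ~~ (p %| n)%N -> abs (n%:R) = 1.
Proof.
move=> pn.
have n0 : (0 < n)%N by case: n pn => //; rewrite dvdn0.
have cop : gcdn n p = 1%N by apply/eqP; rewrite gcdnC -/(coprime p n) prime_coprime.
case: (egcdnP p n0) => km kn e _.
rewrite cop in e.
have e' : (1 : K) = (km * n)%:R - (kn * p)%:R by rewrite e natrD addrC addKr.
apply/le_anti; rewrite abs_nat_le1 /=.
have := hu ((km * n)%:R) (- (kn * p)%:R).
rewrite -e' abs1 absN !natrM !hm.
have a1 := abs_nat_le1 km; have a2 := abs_nat_le1 kn.
have a3 := h0 (n%:R); have a4 := h0 (km%:R); have a5 := h0 (kn%:R).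
have a6 := abs_p_lt1. have a7 := h0 (p%:R).
have b1 : abs (km%:R) * abs (n%:R) <= abs n%:R by nra.
have b2 : abs (kn%:R) * abs (p%:R) < 1 by nra.
move=> h; apply: contraTT h; rewrite -ltNge => hn.
by rewrite -ltNge gt_max; apply/andP; split => //; apply: le_lt_trans b1 hn.
Qed.

Lemma abs_nat_pos n : (0 < n)%N -> 0 < abs (n%:R).
Proof.
elim/ltn_ind: n => n IH n0.
case: (boolP (p %| n)%N) => pn; last by rewrite abs_coprime.
rewrite -(divnK pn) natrM hm mulr_gt0 ?abs_p_gt0 //.
have e0 : (0 < n %/ p)%N by rewrite divn_gt0 ?prime_gt0 // dvdn_leq.
apply: IH e0; rewrite ltn_Pdiv // prime_gt1 //.
Qed.


Lemma pow_sub (q : K) j : abs (q - 1) < 1 -> abs (q ^+ j - 1) <= abs (q - 1).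
Proof.
move=> hq; elim: j => [|j IH]; first by rewrite expr0 subrr abs0 h0.
have e : q ^+ j.+1 - 1 = q * (q ^+ j - 1) + (q - 1) by rewrite exprS; ring.
have aq : abs q <= 1.
  have -> : q = (q - 1) + 1 by rewrite subrK.
  by apply: abs_ultra; rewrite ?abs1 // ltW.
rewrite e; apply: abs_ultra => //.
rewrite hm; have := h0 q; have := h0 (q ^+ j - 1); nra.
Qed.

Lemma notp_case (q : K) d : ~~ (p %| d)%N -> q ^+ d = 1 -> abs (q - 1) < 1 ->
  q != 1 -> False.
Proof.
move=> pd qd hq q1.
have S0 : \sum_(i < d) q ^+ i = 0.
  have := subrX1 q d; rewrite qd subrr => /esym/eqP; rewrite mulf_eq0 subr_eq0.
  by rewrite (negbTE q1) /= => /eqP.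
have e : d%:R = - \sum_(i < d) (q ^+ i - 1).
  by rewrite sumrB S0 sumr_const card_ord sub0r opprK.
have := abs_coprime pd; rewrite e absN => h.
have := @abs_sum d (fun i => q ^+ i - 1) (abs (q - 1)) (h0 _) (fun i => pow_sub i hq).
rewrite h; lra.
Qed.

Lemma r_lt1 (r : R) : 0 < r -> r ^+ p.-1 = (p%:R)^-1 -> r < 1.
Proof.
move=> r0 hr; rewrite ltNge; apply/negP => r1.
have := exprn_ege1 p.-1 r1; rewrite hr.
have := abs_p_lt1; rewrite hp; lra.
Qed.

Lemma abs_bin_le i : (0 < i < p)%N -> abs ('C(p, i)%:R) <= abs (p%:R).
Proof.
move=> hi; have := prime_dvd_bin pp hi => /divnK <-.
rewrite natrM hm; have := abs_nat_le1 ('C(p, i) %/ p); have := h0 (p%:R).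
have := h0 (('C(p, i) %/ p)%:R); nra.
Qed.

Lemma p_case (w : K) (r : R) : w ^+ p = 1 -> w != 1 -> abs (w - 1) < r -> 0 < r ->
  r ^+ p.-1 = (p%:R)^-1 -> False.
Proof.
move=> wp w1 hw r0 hr.
have r1 := r_lt1 r0 hr.
set y := w - 1 in hw.
have y0 : y != 0 by rewrite subr_eq0.
have wy : w = y + 1 by rewrite subrK.
have [p' ep] : exists p', p = p'.+1 by exists p.-1; rewrite prednK // prime_gt0.
have T0 : \sum_(i < p) y ^+ i *+ 'C(p, i.+1) = 0.
  have := exprD1n y p; rewrite -wy wp big_ord_recl /= expr0 bin0 mulr1n => E.
  rewrite (eq_bigr (fun i : 'I_p => y ^+ i.+1 *+ 'C(p, i.+1))) in E; last first.
    by move=> i _; rewrite /bump leq0n add1n.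
  have S0 : \sum_(i < p) y ^+ i.+1 *+ 'C(p, i.+1) = 0.
    by apply: (addrI 1); rewrite addr0 -E.
  have : y * \sum_(i < p) y ^+ i *+ 'C(p, i.+1) = 0.
    rewrite mulr_sumr -[RHS]S0; apply: eq_bigr => i _; by rewrite exprS mulrnAr.
  by move/eqP; rewrite mulf_eq0 (negbTE y0) /= => /eqP.
have T1 : \sum_(i < p'.+1) y ^+ i *+ 'C(p, i.+1) = 0 by rewrite -ep.
rewrite big_ord_recr /= {2}ep binn mulr1n in T1.
have p'0 : p' != 0%N by move: (prime_gt1 pp); rewrite ep; case: (p').
have [p'' e2] : exists p'', p' = p''.+1 by exists p'.-1; rewrite prednK // lt0n.
have ylt1 : abs y < 1 by apply: lt_trans hw r1.
have T2 : \sum_(i < p''.+1) y ^+ i *+ 'C(p, i.+1) + y ^+ p' = 0 by rewrite -e2.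
move: T2; rewrite big_ord_recl /= expr0 bin1 -addrA => T3.
move/eqP: T3; rewrite addr_eq0 => /eqP ep'.
have sle : abs (\sum_(i < p'') y ^+ (bump 0 i) *+ 'C(p, (bump 0 i).+1))
     <= abs (p%:R) * abs y.
  apply: abs_sum => [|i]; first by rewrite mulr_ge0 ?h0.
  rewrite -mulr_natl hm abs_exp.
  have hi : (0 < (bump 0 i).+1 < p)%N.
    rewrite ep e2 /= /bump leq0n add1n !ltnS; by case: i => i hi' /=.
  have := abs_bin_le hi; have := h0 ('C(p, (bump 0 i).+1)%:R).
  have : abs y ^+ bump 0 i <= abs y.
    rewrite /bump leq0n add1n exprS; have := h0 y.
    have : abs y ^+ i <= 1 by rewrite exprn_ile1 ?h0 // ltW.
    nra.
  have := h0 y; have := h0 (p%:R). nra.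
have pmax := hu (\sum_(i < p'') y ^+ (bump 0 i) *+ 'C(p, (bump 0 i).+1)) (y ^+ p').
rewrite -absN -ep' abs_exp in pmax.
have := ltrXn2r p' (h0 y) hw; rewrite p'0 => ylt.
have hr' : r ^+ p' = (p%:R)^-1 by rewrite -hr ep.
rewrite hr' -hp in ylt.
have ap := abs_p_gt0; have ay := h0 y.
have : abs (p%:R) * abs y < abs (p%:R) by rewrite -{2}(mulr1 (abs (p%:R))) ltr_pM2l.
move: pmax; rewrite le_max; case/orP => h; [lra | lra].
Qed.

Lemma no_root (q : K) (r : R) : q != 1 -> abs (q - 1) < r -> 0 < r ->
  r ^+ p.-1 = (p%:R)^-1 -> forall d, (0 < d)%N -> q ^+ d = 1 -> False.
Proof.
move=> q1 hq r0 hr; have r1 := r_lt1 r0 hr.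
have hq1 : abs (q - 1) < 1 by apply: lt_trans hq r1.
elim/ltn_ind => d IH d0 qd.
case: (boolP (p %| d)%N) => pd; last exact: notp_case pd qd hq1 q1.
have de := divnK pd.
have e0 : (0 < d %/ p)%N by rewrite divn_gt0 ?prime_gt0 // dvdn_leq.
have ed : (d %/ p < d)%N by rewrite ltn_Pdiv // prime_gt1.
case: (eqVneq (q ^+ (d %/ p)) 1) => [qe|qe]; first exact: IH _ ed e0 qe.
have wp : (q ^+ (d %/ p)) ^+ p = 1 by rewrite -exprM de.
have hw : abs (q ^+ (d %/ p) - 1) < r by apply: le_lt_trans (pow_sub _ hq1) hq.
exact: (p_case wp qe hw r0 hr).
Qed.

Lemma qnum_nz (q : K) (r : R) : abs (q - 1) < r -> 0 < r ->
  r ^+ p.-1 = (p%:R)^-1 -> forall i, (0 < i)%N -> qnum q i != 0.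
Proof.
move=> hq r0 hr i i0; case: (eqVneq q 1) => [->|q1].
  rewrite /qnum (eq_bigr (fun _ => 1)); last by move=> j _; rewrite expr1n.
  rewrite sumr_const card_ord; apply/eqP => h.
  by have := abs_nat_pos i0; rewrite h abs0 ltxx.
apply/eqP => S0; apply: (no_root q1 hq r0 hr i0).
have := subrX1 q i; rewrite /qnum in S0; rewrite S0 mulr0 => /eqP.
by rewrite subr_eq0 => /eqP.
Qed.

End Abs.

Lemma rpow (R : realType) (p : nat) : (1 < p)%N ->
  ((p%:R : R) `^ (- (p%:R - 1)^-1)) ^+ p.-1 = (p%:R : R)^-1.
Proof.
move=> p1.
have p0 : (0 < p)%N by apply: ltn_trans p1.
have ep : (p%:R : R) - 1 = (p.-1)%:R by rewrite -{1}(prednK p0) -addn1 natrD addrK.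
have n0 : (p.-1)%:R != (0 : R) by rewrite pnatr_eq0 -lt0n -ltnS prednK.
rewrite ep -powR_mulrn ?powR_ge0 // -powRrM.
have -> : - ((p.-1)%:R : R)^-1 * (p.-1)%:R = 1 *- 1 by rewrite mulNr mulVf.
by rewrite powR_invn ?ler0n // expr1.
Qed.

Theorem mainTheorem3 (R : realType) (K : closedFieldType) (p : nat)
    (abs : K -> R) (q : K) (m n : nat) :
  prime p -> odd p -> padic_abs p abs ->
  abs (1 - q) < (p%:R : R) `^ (- (p%:R - 1)^-1) ->
  (m <= n)%N ->
  'C(n, m)%:R * (q - 1) ^+ m =
    \sum_(m <= k < n.+1) (q - 1) ^+ k * qbinom q n k * qstirling1 q k m.
Proof.
move=> pp podd habs hq hmn.
set r := (p%:R : R) `^ (- (p%:R - 1)^-1) in hq.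
have r0 : 0 < r by rewrite powR_gt0 // ltr0n prime_gt0.
have hr : r ^+ p.-1 = (p%:R)^-1 by apply: rpow; exact: prime_gt1.
have hq' : abs (q - 1) < r by rewrite (absB habs).
have qnz := qnum_nz habs pp hq' r0 hr.
have r1 := r_lt1 habs pp r0 hr.
have q0 : q != 0.
  apply/eqP => e; move: hq; rewrite e subr0 (abs1 habs); lra.
have qfnz : forall j, qfact q j != 0.
  move=> j; rewrite /qfact prodf_seq_neq0; apply/allP => i.
  by rewrite mem_index_iota => /andP[i1 _]; exact: qnz.
have qb : forall k, (k <= n)%N -> qbinom q n k = Gq q n k.
  move=> k hk; rewrite /qbinom -(Gq_fact q hk) -(mulrA (Gq q n k)) mulfK // mulf_neq0 //.
rewrite (eq_big_nat _ _ (F2 := fun k => ((q - 1) ^+ k * Gq q n k) * (Pk q k)`_m));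
  last first.
  by move=> k /andP[_ hk]; rewrite stir_eq // qb.
transitivity (((1 + (q - 1) *: 'X) ^+ n)`_m); first by rewrite coef_binom // mulr_natl.
rewrite -polyid coef_sum.
have z : \sum_(0 <= k < m) ((q - 1) ^+ k * Gq q n k) * (Pk q k)`_m = 0.
  rewrite big_nat_cond big1 // => k /andP[/andP[_ hk] _].
  by rewrite nth_default ?mulr0 // size_Pk.
rewrite (@big_cat_nat _ _ _ m) //= ?leqW //.
rewrite [X in X + _](_ : _ = 0); last first.
  by rewrite -[RHS]z; apply: eq_bigr => k _; exact: coefZ.
by rewrite add0r; apply: eq_bigr => k _; exact: coefZ.
Qed.
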